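(* Let $f,g\in R=A[t;\sigma,\delta]$ with $g$ not a zero divisor in $R$ and $Rf+Rg=R$. Suppose there is $m\in R$ with $Rm=Rf\cap Rg$, and let $f',g'\in R$ satisfy $m=f'g=g'f$. Let $T$ be any $(\sigma,\delta)$-pseudo-linear transformation on a left $A$-module $V$. Then: (a) $R/Rf'\cong R/Rf$ as left $R$-modules (via $h+Rf'\mapsto hg+Rf$); (b) $g(T)(\ker f(T))=\ker f'(T)$; (c) $\ker m(T)=\ker f(T)\oplus\ker g(T)$.
   Context: $A$ is a ring with $1$, $\sigma$ a unital ring endomorphism, $\delta$ a $\sigma$-derivation ($\delta$ additive, $\delta(ab)=\sigma(a)\delta(b)+\delta(a)b$); $R=A[t;\sigma,\delta]$ is the Ore extension with $ta=\sigma(a)t+\delta(a)$. A $(\sigma,\delta)$-pseudo-linear transformation on a left $A$-module $V$ is an additive $T:V\to V$ with $T(\alpha v)=\sigma(\alpha)T(v)+\delta(\alpha)v$; for $h=\sum a_it^i\in R$, $h(T)(v)=\sum a_iT^i(v)$. *)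

(* Defs.v *)
From HB Require Import structures.
From mathcomp Require Import all_boot all_order all_algebra.
Set Implicit Arguments. Unset Strict Implicit. Unset Printing Implicit Defensive.
Import GRing.Theory.
Local Open Scope ring_scope.

Definition is_sigma_derivation (A : nzRingType) (sigma : A -> A) (delta : A -> A) :=
  (forall a b, delta (a + b) = delta a + delta b) /\
  (forall a b, delta (a * b) = sigma a * delta b + delta a * b).

Definition ore_phi (A : nzRingType) (R : nzRingType) (iota : A -> R) (t : R)
  (p : {poly A}) : R :=
  \sum_(i < size p) iota p`_i * t ^+ i.

(* R is the Ore extension A[t; sigma, delta]: R contains A (via the injective
   unital ring morphism iota), R is a free left A-module with basis 1, t, t^2, ...
   (i.e. ore_phi is a bijection from coefficient polynomials onto R), and
   t a = sigma(a) t + delta(a). *)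
Definition is_ore_extension (A : nzRingType) (sigma delta : A -> A)
  (R : nzRingType) (iota : {rmorphism A -> R}) (t : R) :=
  [/\ injective iota,
      bijective (ore_phi iota t) &
      forall a : A, t * iota a = iota (sigma a) * t + iota (delta a)].

Definition pseudo_linear (A : nzRingType) (sigma delta : A -> A)
  (V : lmodType A) (T : V -> V) :=
  (forall u v, T (u + v) = T u + T v) /\
  (forall (a : A) (v : V), T (a *: v) = sigma a *: T v + delta a *: v).

(* h(T)(v) = sum_i a_i T^i(v), for h = sum_i a_i t^i with coefficients p *)
Definition op_eval (A : nzRingType) (V : lmodType A) (T : V -> V)
  (p : {poly A}) (v : V) : V :=
  \sum_(i < size p) p`_i *: iter i T v.

Definition in_left_ideal (R : nzRingType) (x y : R) := exists r : R, y = r * x.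

(* Main.v *)
Require Import Defs.
From Stdlib Require Import Setoid.
From HB Require Import structures.
From mathcomp Require Import all_boot all_order all_algebra.
Set Implicit Arguments. Unset Strict Implicit. Unset Printing Implicit Defensive.
Import GRing.Theory.
Local Open Scope ring_scope.

Lemma phi_widen (A R : nzRingType) (iota : {rmorphism A -> R}) (t : R) (p : {poly A}) n :
  (size p <= n)%N -> ore_phi iota t p = \sum_(i < n) iota p`_i * t ^+ i.
Proof.
move=> H; rewrite /ore_phi (big_ord_widen n (fun i => iota p`_i * t ^+ i) H) big_mkcond.
apply: eq_bigr => i _; case: ltnP => // Hi; by rewrite nth_default // rmorph0 mul0r.
Qed.

Lemma ev_widen (A : nzRingType) (V : lmodType A) (T : V -> V) (p : {poly A}) v n :
  (size p <= n)%N -> op_eval T p v = \sum_(i < n) p`_i *: iter i T v.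
Proof.
move=> H; rewrite /op_eval (big_ord_widen n (fun i => p`_i *: iter i T v) H) big_mkcond.
apply: eq_bigr => i _; case: ltnP => // Hi; by rewrite nth_default // scale0r.
Qed.

Lemma phi_add (A R : nzRingType) (iota : {rmorphism A -> R}) (t : R) (p q : {poly A}) :
  ore_phi iota t (p + q) = ore_phi iota t p + ore_phi iota t q.
Proof.
set n := maxn (size p) (size q).
rewrite (@phi_widen _ _ _ _ (p + q) n) ?size_polyD // (@phi_widen _ _ _ _ p n) ?leq_maxl //.
rewrite (@phi_widen _ _ _ _ q n) ?leq_maxr // -big_split; apply: eq_bigr => i _.
by rewrite coefD rmorphD mulrDl.
Qed.

Lemma phi0 (A R : nzRingType) (iota : {rmorphism A -> R}) (t : R) :
  ore_phi iota t 0 = 0.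
Proof. by rewrite /ore_phi size_poly0 big_ord0. Qed.

Lemma phi1 (A R : nzRingType) (iota : {rmorphism A -> R}) (t : R) :
  ore_phi iota t 1 = 1.
Proof. by rewrite /ore_phi size_poly1 big_ord1 coefC /= rmorph1 mul1r expr0. Qed.

Lemma ev_add (A : nzRingType) (V : lmodType A) (T : V -> V) (p q : {poly A}) v :
  op_eval T (p + q) v = op_eval T p v + op_eval T q v.
Proof.
set n := maxn (size p) (size q).
rewrite (@ev_widen _ _ _ (p + q) _ n) ?size_polyD // (@ev_widen _ _ _ p _ n) ?leq_maxl //.
rewrite (@ev_widen _ _ _ q _ n) ?leq_maxr // -big_split; apply: eq_bigr => i _.
by rewrite coefD scalerDl.
Qed.

Lemma ev0 (A : nzRingType) (V : lmodType A) (T : V -> V) v : op_eval T 0 v = 0.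
Proof. by rewrite /op_eval size_poly0 big_ord0. Qed.

Lemma ev1 (A : nzRingType) (V : lmodType A) (T : V -> V) v : op_eval T 1 v = v.
Proof. by rewrite /op_eval size_poly1 big_ord1 coefC /= scale1r. Qed.

Lemma iter_add (A : nzRingType) (V : lmodType A) (T : V -> V)
  (hT : forall u v, T (u + v) = T u + T v) i u w :
  iter i T (u + w) = iter i T u + iter i T w.
Proof. by elim: i => //= i ->; rewrite hT. Qed.

Lemma ev_addv (A : nzRingType) (V : lmodType A) (T : V -> V)
  (hT : forall u v, T (u + v) = T u + T v) p u w :
  op_eval T p (u + w) = op_eval T p u + op_eval T p w.
Proof.
rewrite /op_eval -big_split; apply: eq_bigr => i _.
by rewrite iter_add // scalerDr.
Qed.

Lemma phi_scale (A R : nzRingType) (iota : {rmorphism A -> R}) (t : R) a (q : {poly A}) :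
  ore_phi iota t (a *: q) = iota a * ore_phi iota t q.
Proof.
rewrite (@phi_widen _ _ _ _ _ (size q)) ?size_scale_leq // /ore_phi mulr_sumr.
by apply: eq_bigr => i _; rewrite coefZ rmorphM mulrA.
Qed.

Lemma ev_scale (A : nzRingType) (V : lmodType A) (T : V -> V) a (q : {poly A}) v :
  op_eval T (a *: q) v = a *: op_eval T q v.
Proof.
rewrite (@ev_widen _ _ _ _ _ (size q)) ?size_scale_leq // /op_eval scaler_sumr.
by apply: eq_bigr => i _; rewrite coefZ scalerA.
Qed.
Definition Qt (A : nzRingType) (sigma delta : A -> A) (q : {poly A}) : {poly A} :=
  \poly_(i < (size q).+1) ((if i is j.+1 then sigma q`_j else 0) + delta q`_i).

Lemma phi_t (A R : nzRingType) (sigma delta : A -> A) (iota : {rmorphism A -> R}) (t : R)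
  (ht : forall a, t * iota a = iota (sigma a) * t + iota (delta a)) (hd0 : delta 0 = 0)
  (q : {poly A}) :
  t * ore_phi iota t q = ore_phi iota t (Qt sigma delta q).
Proof.
rewrite (@phi_widen _ _ _ _ (Qt sigma delta q) (size q).+1) ?size_poly //.
under eq_bigr => i _ do rewrite coef_poly ltn_ord rmorphD mulrDl.
rewrite big_split /= big_ord_recl big_ord_recr /= rmorph0 mul0r add0r.
rewrite nth_default // hd0 rmorph0 mul0r addr0.
rewrite /ore_phi mulr_sumr -big_split; apply: eq_bigr => i _ /=.
by rewrite mulrA ht mulrDl exprS !mulrA.
Qed.

Lemma ev_t (A : nzRingType) (sigma delta : A -> A) (V : lmodType A) (T : V -> V)
  (hT : pseudo_linear sigma delta T) (hd0 : delta 0 = 0) (q : {poly A}) v :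
  T (op_eval T q v) = op_eval T (Qt sigma delta q) v.
Proof.
case: hT => hTa hTs.
have T0 : T 0 = 0 by apply: (@addrI _ (T 0)); rewrite -hTa !addr0.
rewrite (@ev_widen _ _ _ (Qt sigma delta q) _ (size q).+1) ?size_poly //.
under eq_bigr => i _ do rewrite coef_poly ltn_ord scalerDl.
rewrite big_split /= big_ord_recl big_ord_recr /= scale0r add0r.
rewrite nth_default // hd0 scale0r addr0.
rewrite /op_eval (big_morph T hTa T0) -big_split; apply: eq_bigr => i _ /=.
by rewrite hTs.
Qed.
Lemma action (A : nzRingType) (sigma : {rmorphism A -> A}) (delta : A -> A)
  (hdelta : is_sigma_derivation sigma delta)
  (R : nzRingType) (iota : {rmorphism A -> R}) (t : R)
  (hR : is_ore_extension sigma delta iota t)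
  (V : lmodType A) (T : V -> V) (hT : pseudo_linear sigma delta T) :
  exists Phi : R -> V -> V,
    [/\ (forall p v, Phi (ore_phi iota t p) v = op_eval T p v),
        (forall r s v, Phi (r + s) v = Phi r v + Phi s v),
        (forall r s v, Phi (r * s) v = Phi r (Phi s v)),
        (forall v, Phi 1 v = v) &
        (forall r u w, Phi r (u + w) = Phi r u + Phi r w)].
Proof.
case: hR => _ [psi K1 K2] ht.
case: hdelta => hda _.
have hd0 : delta 0 = 0 by apply: (@addrI _ (delta 0)); rewrite -hda !addr0.
have hTa := hT.1.
exists (fun r v => op_eval T (psi r) v).
have P1 : forall p v, op_eval T (psi (ore_phi iota t p)) v = op_eval T p v by move=> p v; rewrite K1.
have Padd : forall r s v, op_eval T (psi (r + s)) v = op_eval T (psi r) v + op_eval T (psi s) v.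
  move=> r s v; rewrite -{1}(K2 r) -{1}(K2 s) -phi_add K1; exact: ev_add.
have P0 : forall v, op_eval T (psi 0) v = 0 by move=> v; rewrite -(phi0 iota t) K1 ev0.
have Pio : forall a s v, op_eval T (psi (iota a * s)) v = a *: op_eval T (psi s) v.
  move=> a s v; rewrite -{1}(K2 s) -phi_scale K1; exact: ev_scale.
have Pt : forall s v, op_eval T (psi (t * s)) v = T (op_eval T (psi s) v).
  move=> s v; rewrite -{1}(K2 s) (phi_t ht hd0) K1 (ev_t hT hd0) //.
have Ptn : forall i s v, op_eval T (psi (t ^+ i * s)) v = iter i T (op_eval T (psi s) v).
  move=> i s v; elim: i => [|i IH]; first by rewrite expr0 mul1r.
  by rewrite exprS -mulrA Pt IH.
have Pmul : forall r s v, op_eval T (psi (r * s)) v = op_eval T (psi r) (op_eval T (psi s) v).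
  move=> r s v; rewrite -(K2 r) K1 {1}/ore_phi mulr_suml.
  rewrite (big_morph (fun r => op_eval T (psi r) v) (fun r s => Padd r s v) (P0 v)).
  rewrite {3}/op_eval; apply: eq_bigr => i _; by rewrite -mulrA Pio Ptn.
split => //.
- by move=> v; rewrite -(phi1 iota t) K1 ev1.
- by move=> r u w; rewrite ev_addv.
Qed.
Theorem proposition1p16
  (A : nzRingType) (sigma : {rmorphism A -> A}) (delta : A -> A)
  (hdelta : is_sigma_derivation sigma delta)
  (R : nzRingType) (iota : {rmorphism A -> R}) (t : R)
  (hR : is_ore_extension sigma delta iota t)
  (f g m f' g' : {poly A})
  (hg_nzd : forall r : R, (r * ore_phi iota t g = 0 -> r = 0) /\
                          (ore_phi iota t g * r = 0 -> r = 0))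
  (hcomax : forall r : R, exists a b : R,
      r = a * ore_phi iota t f + b * ore_phi iota t g)
  (hlcm : forall r : R, in_left_ideal (ore_phi iota t m) r <->
      (in_left_ideal (ore_phi iota t f) r /\ in_left_ideal (ore_phi iota t g) r))
  (hf'g : ore_phi iota t m = ore_phi iota t f' * ore_phi iota t g)
  (hg'f : ore_phi iota t m = ore_phi iota t g' * ore_phi iota t f)
  (V : lmodType A) (T : V -> V) (hT : pseudo_linear sigma delta T) :
  ((forall h1 h2 : R, in_left_ideal (ore_phi iota t f') (h1 - h2) <->
        in_left_ideal (ore_phi iota t f) (h1 * ore_phi iota t g - h2 * ore_phi iota t g)) /\
   (forall k : R, exists h : R,
        in_left_ideal (ore_phi iota t f) (k - h * ore_phi iota t g))) /\
  (forall w : V, (exists v : V, op_eval T f v = 0 /\ op_eval T g v = w) <->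
        op_eval T f' w = 0) /\
  ((forall v : V, op_eval T m v = 0 <->
       exists v1 v2 : V, [/\ op_eval T f v1 = 0, op_eval T g v2 = 0 & v = v1 + v2]) /\
   (forall v : V, op_eval T f v = 0 -> op_eval T g v = 0 -> v = 0)).
Proof.
have [Phi [P1 Padd Pmul Pone Paddv]] := action hdelta hR hT.
have Pv0 : forall r, Phi r 0 = 0.
  by move=> r; apply: (@addrI _ (Phi r 0)); rewrite -Paddv !addr0.
setoid_rewrite <- P1.
set F := ore_phi iota t f in hg_nzd hcomax hlcm hf'g hg'f P1 *; set G := ore_phi iota t g in hg_nzd hcomax hlcm hf'g hg'f P1 *; set M := ore_phi iota t m in hg_nzd hcomax hlcm hf'g hg'f P1 *.
set F' := ore_phi iota t f' in hg_nzd hcomax hlcm hf'g hg'f P1 *; set G' := ore_phi iota t g' in hg_nzd hcomax hlcm hf'g hg'f P1 *.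
have key : forall h, in_left_ideal F (h * G) -> in_left_ideal F' h.
  move=> h hF.
  have [s hs] : in_left_ideal M (h * G) by apply/hlcm; split => //; exists h.
  exists s; apply/eqP; rewrite -subr_eq0; apply/eqP; apply: (hg_nzd _).1.
  by rewrite mulrBl hs hf'g mulrA subrr.
have [a [b hab]] := hcomax 1.
have hbG : b * G = 1 - a * F by rewrite hab (addrC (a*F)) addrK.
have haF : a * F = 1 - b * G by rewrite hab addrK.
split; [split|split; [|split]].
- move=> h1 h2; rewrite -mulrBl; split.
    by case=> r ->; exists (r * G'); rewrite -mulrA -hg'f hf'g mulrA.
  exact: key.
- move=> k; have [a' [b' ->]] := hcomax k; exists b'.
  by exists a'; rewrite addrK.
- move=> w; split.
    case=> v [hv <-]; by rewrite -Pmul -hf'g hg'f Pmul hv Pv0.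
  move=> hw.
  have [c hc] : in_left_ideal F' (F * b).
    apply: key; exists (1 - F * a).
    by rewrite -mulrA hbG mulrBr mulr1 mulrBl mul1r mulrA.
  have [d hd] : in_left_ideal F' (G * b - 1).
    apply: key; exists (- (G * a)).
    by rewrite mulrBl -mulrA hbG mulrBr mulr1 mul1r addrAC subrr add0r mulNr mulrA.
  exists (Phi b w); split.
    by rewrite -Pmul hc Pmul hw Pv0.
  rewrite -Pmul -[G * b](subrK 1) hd Padd Pmul hw Pv0 add0r Pone //.
- move=> v; split.
    move=> hv.
    have [s hs] : in_left_ideal M (F * (b * G)).
      apply/hlcm; split; last by exists (F * b); rewrite mulrA.
      exists (1 - F * a).
      by rewrite hbG mulrBr mulr1 mulrBl mul1r mulrA.
    have [s' hs'] : in_left_ideal M (G * (a * F)).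
      apply/hlcm; split; first by exists (G * a); rewrite mulrA.
      exists (1 - G * b).
      by rewrite haF mulrBr mulr1 mulrBl mul1r mulrA.
    exists (Phi (b * G) v), (Phi (a * F) v); split.
    + by rewrite -Pmul hs Pmul hv Pv0.
    + by rewrite -Pmul hs' Pmul hv Pv0.
    + by rewrite -Padd addrC -hab Pone.
  case=> v1 [v2 [h1 h2 ->]].
  by rewrite Paddv {1}hg'f Pmul h1 Pv0 hf'g Pmul h2 Pv0 addr0.
- move=> v hf hg.
  by rewrite -(Pone v) hab Padd !Pmul hf hg !Pv0 addr0.
Qed.
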